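(* The unique solution of $\frac{d}{dt}s(t)=H(\pi)s(t)$, $s(0)\in\mathbb V$, is $s(t)=e^{H(\pi)t}s(0)$, and there exist $\delta_2>0$ and $D_4<\infty$ such that for all $s(0)\in\mathbb V$ and $t\ge0$, $\|s(t)\|_2\le D_4e^{-\delta_2t}\|s(0)\|_2$.
   Context: Fix integers $C\ge1$, $d\ge1$ and a real $\sigma>0$. $\mathbb V=\{v\in\mathbb R^{C+1}:v_0=0\}$ with Euclidean norm $\|\cdot\|_2$. $\pi\in\mathbb R^{C+1}$ is the unique vector with $1=\pi_0\ge\pi_1\ge\cdots\ge\pi_C\ge0$ satisfying $\sigma(\pi_{n-1}^d-\pi_n^d)=n(\pi_n-\pi_{n+1})$ for $1\le n\le C$, $\pi_{C+1}=0$. $H(\pi):\mathbb V\to\mathbb V$ is the linear map $(H(\pi)b)_0=0$, $(H(\pi)b)_n=\sigma d\,\pi_{n-1}^{d-1}b_{n-1}-(\sigma d\,\pi_n^{d-1}+n)b_n+nb_{n+1}$ for $1\le n\le C$ (with $b_{C+1}:=0$). *)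

(* Defs.v *)
From mathcomp Require Import all_boot all_order all_algebra.
From mathcomp Require Import all_classical all_reals all_analysis.
Set Implicit Arguments. Unset Strict Implicit. Unset Printing Implicit Defensive.
Import Order.TTheory GRing.Theory Num.Theory numFieldNormedType.Exports.
Local Open Scope classical_set_scope.
Local Open Scope ring_scope.

Section Defs.
Variable R : realType.

(* The space V = {v in R^{C+1} : v_0 = 0} is identified with column vectors
   'cV[R]_C: index i : 'I_C stands for the coordinate n = i+1. *)

Definition enorm (C : nat) (v : 'cV[R]_C) : R :=
  Num.sqrt (\sum_(i < C) (v i 0) ^+ 2).

(* The matrix of H(pi) in the coordinates n = 1..C (b_0 = 0, b_{C+1} = 0). *)
Definition Hmat (C d : nat) (sigma : R) (pi : nat -> R) : 'M[R]_C :=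
  \matrix_(i < C, j < C)
    let n := i.+1 in let m := j.+1 in
    if m.+1 == n then sigma * d%:R * pi n.-1 ^+ d.-1
    else if m == n then - (sigma * d%:R * pi n ^+ d.-1 + n%:R)
    else if m == n.+1 then n%:R
    else 0.

Definition expmx (C : nat) (A : 'M[R]_C) : 'M[R]_C :=
  \matrix_(i < C, j < C)
    limn (@series R (fun k : nat => (A ^+ k) i j / (k`!)%:R)).

Definition is_solution (C : nat) (H : 'M[R]_C) (s0 : 'cV[R]_C)
  (s : R -> 'cV[R]_C) : Prop :=
  s 0 = s0 /\
  (forall i : 'I_C, {within [set t : R | 0 <= t], continuous (fun t => s t i 0)}) /\
  (forall t : R, 0 < t -> forall i : 'I_C,
      is_derive t 1 (fun u => s u i 0) ((H *m s t) i 0)).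

End Defs.

(* Main.v *)
Require Import Defs.
From mathcomp Require Import all_boot all_order all_algebra.
From mathcomp Require Import all_classical all_reals all_analysis.
From mathcomp Require Import ring lra zify.
Import Order.TTheory GRing.Theory Num.Theory numFieldNormedType.Exports.
Local Open Scope classical_set_scope.
Local Open Scope ring_scope.

Set Implicit Arguments.



Section Aux.
Context {R : realType} {n : nat}.
Implicit Types A : 'M[R]_n.

Definition Mb A : R := \sum_i \sum_j `|A i j|.

Lemma Mb_ge0 A : 0 <= Mb A.
Proof. by apply: sumr_ge0 => i _; apply: sumr_ge0. Qed.

Lemma row_le_Mb A i : \sum_j `|A i j| <= Mb A.
Proof.
rewrite /Mb [X in _ <= X](bigD1 i) //= lerDl; apply: sumr_ge0 => k _; apply: sumr_ge0 => *; exact: normr_ge0.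
Qed.

Lemma entry_le_Mb A i j : `|A i j| <= Mb A.
Proof.
apply: le_trans (row_le_Mb A i).
by rewrite (bigD1 j) //= lerDl; apply: sumr_ge0.
Qed.

Lemma pow_bound A k i j : `|(A ^+ k) i j| <= Mb A ^+ k.
Proof.
elim: k i j => [|k IH] i j.
  rewrite expr0 mxE; case: (i == j) => /=; rewrite ?normr1 ?normr0 //.
rewrite exprS mxE (le_trans (ler_norm_sum _ _ _)) //.
apply: (@le_trans _ _ (\sum_l `|A i l| * Mb A ^+ k)).
  apply: ler_sum => l _; rewrite normrM ler_wpM2l //.
by rewrite -mulr_suml exprS ler_wpM2r ?exprn_ge0 ?Mb_ge0 ?row_le_Mb.
Qed.

Definition coef A (p : nat) i j (k : nat) : R := (A ^+ (k + p)) i j / (k`!)%:R.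

Lemma coef_cvg A p i j x : cvgn (pseries (coef A p i j) x).
Proof.
apply: normed_cvg.
apply: (@series_le_cvg _ _ (fun k => Mb A ^+ p * exp_coeff (Mb A * `|x|) k)).
- by move=> k; rewrite normr_ge0.
- move=> k; apply: mulr_ge0; first by rewrite exprn_ge0 ?Mb_ge0.
  by apply: exp_coeff_ge0; rewrite mulr_ge0 ?Mb_ge0.
- move=> k /=; rewrite /coef /exp_coeff /= normrM normrM normfV normr_nat normrX.
  rewrite [leRHS](_ : _ = Mb A ^+ (k+p) / k`!%:R * `|x| ^+ k); last first.
    by rewrite exprMn exprD; ring.
  rewrite ler_wpM2r ?exprn_ge0 //.
  by rewrite ler_wpM2r ?invr_ge0 // pow_bound.
- exact/is_cvg_seriesZ/is_cvg_series_exp_coeff.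
Qed.

End Aux.



Section Aux2.
Context {R : realType} {n : nat}.
Implicit Types A : 'M[R]_n.

Lemma lim_sum_ord (u : 'I_n -> nat -> R) : (forall l, cvgn (u l)) ->
  cvgn (fun N => \sum_l u l N) /\
  limn (fun N => \sum_l u l N) = \sum_l limn (u l).
Proof.
move=> cu.
have H : (fun N => \sum_l u l N) @ \oo --> \sum_l limn (u l).
  apply: (cvg_big add_continuous) => // l _.

by split; [apply/cvg_ex; eexists; exact: H | exact: cvg_lim].
Qed.

Lemma diffs_coef A p i j : pseries_diffs (coef A p i j) = coef A p.+1 i j.
Proof.
apply/funext => k; rewrite /pseries_diffs /coef factS natrM invfM addSnnS.
have hk : (k.+1%:R : R) != 0 by rewrite pnatr_eq0.
by rewrite mulrCA; congr (_ * _); rewrite mulrA mulfV // mul1r.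
Qed.

Definition ent A i j (t : R) := limn (pseries (coef A 0 i j) t).

Lemma ent_derive A i j (t : R) :
  is_derive t (1:R) (ent A i j) (limn (pseries (coef A 1 i j) t)).
Proof.
rewrite /ent -diffs_coef.
apply: (@pseries_snd_diffs _ _ (`|t| + 1)).
- exact: coef_cvg.
- rewrite diffs_coef; exact: coef_cvg.
- rewrite !diffs_coef; exact: coef_cvg.
- by rewrite [ltRHS]ger0_norm ?addr_ge0 // ltrDl.
Qed.

Lemma coef1_lim A i j (t : R) :
  limn (pseries (coef A 1 i j) t) = \sum_l A i l * ent A l j t.
Proof.
have -> : pseries (coef A 1 i j) t =
    (fun N => \sum_l A i l * pseries (coef A 0 l j) t N).
  apply/funext => N; rewrite /pseries /series /=.
  under [RHS]eq_bigr do rewrite mulr_sumr.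
  rewrite exchange_big /=; apply: eq_bigr => k _.
  rewrite /coef addn1 exprS mxE mulr_suml mulr_suml; apply: eq_bigr => l _.
  by rewrite addn0; ring.
have hc : forall l, cvgn (fun N => A i l * pseries (coef A 0 l j) t N).
  by move=> l; apply: is_cvgMr; exact: coef_cvg.
have [_ ->] := lim_sum_ord _ hc.
apply: eq_bigr => l _; rewrite /ent.
by rewrite limM //; [rewrite lim_cst | exact: is_cvg_cst | exact: coef_cvg].
Qed.

End Aux2.



Section Aux3.
Context {R : realType} {n : nat}.
Implicit Types A : 'M[R]_n.

Definition Emx A (t : R) : 'M[R]_n := \matrix_(i, j) ent A i j t.

Lemma exprZ_entry A (t : R) k i j : ((t *: A) ^+ k) i j = t ^+ k * (A ^+ k) i j.
Proof.
elim: k i j => [|k IH] i j; first by rewrite !expr0 mul1r.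
rewrite !exprS !mxE mulr_sumr; apply: eq_bigr => l _.
by rewrite IH !mxE; ring.
Qed.

Lemma expmx_Emx A t : expmx (t *: A) = Emx A t.
Proof.
apply/matrixP => i j; rewrite !mxE /ent.
suff -> : series (fun k => ((t *: A) ^+ k) i j / (k`!)%:R) =
  pseries (coef A 0 i j) t by [].
apply/funext => N.
rewrite /pseries /series /=; apply: eq_bigr => k _.
by rewrite exprZ_entry /coef addn0; ring.
Qed.

Lemma Emx0 A : Emx A 0 = 1%:M.
Proof.
apply/matrixP => i j; rewrite !mxE /ent.
apply: lim_near_cst => //; near=> N.
have hN : (0 < N)%N by near: N; exists 1%N.
rewrite /pseries /series /= -(prednK hN) big_nat_recl //= big1 ?addr0.
  by rewrite expr0 mulr1 /coef add0n expr0 mxE fact0 divr1.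
by move=> k _; rewrite expr0n /= mulr0.
Unshelve. all: by end_near. Qed.

Lemma Emx_derive A (s0 : 'cV[R]_n) i (t : R) :
  is_derive t (1:R) (fun u => (Emx A u *m s0) i 0) ((A *m (Emx A t *m s0)) i 0).
Proof.
have -> : (fun u => (Emx A u *m s0) i 0) = \sum_j (s0 j 0 \*: ent A i j).
  apply/funext => u; rewrite fct_sumE mxE; apply: eq_bigr => j _.
  by rewrite mxE /= mulrC.
have D := is_derive_sum (fun j => is_deriveZ (s0 j 0) (ent_derive A i j t)).
apply: (is_derive_eq D).
rewrite mulmxA mxE; apply: eq_bigr => j _.
rewrite coef1_lim !mxE mulrC; congr (_ * _); apply: eq_bigr => l _.
by rewrite mxE.
Qed.

Lemma Emx_sol A (s0 : 'cV[R]_n) : is_solution A s0 (fun t => Emx A t *m s0).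
Proof.
split; first by rewrite Emx0 mul1mx.
split.
  move=> i; apply: continuous_subspaceT => x.
  apply/differentiable_continuous/derivable1_diffP.
  exact: (@ex_derive _ _ _ _ _ _ _ (Emx_derive A s0 i x)).
by move=> t _ i; exact: Emx_derive.
Qed.

End Aux3.



Section Aux4.
Context {R : realType} {n : nat}.
Implicit Types A : 'M[R]_n.

Lemma sq_le_sum (x : 'cV[R]_n) i : x i 0 * x i 0 <= \sum_k x k 0 * x k 0.
Proof.
rewrite (bigD1 i) //= lerDl; apply: sumr_ge0 => k _; exact: mulr_ge0_le0 || nra.
Qed.

Lemma quad_bound A (x : 'cV[R]_n) :
  \sum_i x i 0 * (A *m x) i 0 <= Mb A * \sum_k x k 0 * x k 0.
Proof.
set S := \sum_k x k 0 * x k 0.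
rewrite /Mb mulr_suml; apply: ler_sum => i _.
rewrite mxE mulr_sumr mulr_suml; apply: ler_sum => l _.
have hi := sq_le_sum x i; have hl := sq_le_sum x l.
apply: (le_trans (ler_norm _)).
rewrite normrM normrM mulrCA ler_wpM2l //.
rewrite -normrM.
have : `|x i 0| * `|x l 0| <= S.
  have ha : `|x i 0| * `|x i 0| <= S by rewrite -normrM ger0_norm; [exact: sq_le_sum | nra].
  have hb : `|x l 0| * `|x l 0| <= S by rewrite -normrM ger0_norm; [exact: sq_le_sum | nra].
  have h1 := normr_ge0 (x i 0); have h2 := normr_ge0 (x l 0).
  nra.
by rewrite normrM.
Qed.

Lemma uniq0 A (w : R -> 'cV[R]_n) : is_solution A 0 w ->
  forall t, 0 <= t -> w t = 0.
Proof.
move=> [w0 [wc wd]] t t0.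
set K := Mb A.
pose f (i : 'I_n) : R -> R := fun u => w u i 0.
pose S : R -> R := \sum_i (f i * f i).
pose c : R := - (2 * K).
pose e := expR \o (c \*: id).
have SE (v : R) : S v = \sum_i w v i 0 * w v i 0.
  by rewrite /S fct_sumE.
have De u : is_derive u (1:R) e (expR ((c \*: id) u) * (c *: 1)).
  apply: is_derive1_comp.
have DS (u : R) : 0 < u -> is_derive u (1:R) S
    (\sum_i (f i u *: (A *m w u) i 0 + f i u *: (A *m w u) i 0)).
  move=> u0; apply: is_derive_sum => i.
  by apply: is_deriveM; exact: wd.
have D (u : R) : 0 < u -> is_derive u (1:R) (e * S)
    (e u *: (\sum_i (f i u *: (A *m w u) i 0 + f i u *: (A *m w u) i 0))
     + S u *: (expR ((c \*: id) u) * (c *: 1))).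
  by move=> u0; apply: is_deriveM (De u) (DS u u0).
have epos u : 0 < e u by exact: expR_gt0.
have key : forall x y, 0 <= x -> x <= y -> (e * S) y <= (e * S) x.
  apply: ler0_derive1_nincry.
  - move=> x; rewrite in_itv /= andbT => x0.
    exact: (@ex_derive _ _ _ _ _ _ _ (D x x0)).
  - move=> x; rewrite in_itv /= andbT => x0.
    rewrite derive1E (@derive_val _ _ _ _ _ _ _ (D x x0)).
    rewrite SE.
    have q := quad_bound A (w x).
    have ex := epos x.
    rewrite /= in ex *.
    rewrite big_split /= /f.
    rewrite -/(e x).
    set Q := \sum_i _ in q.
    set Sx := \sum_k _ in q.
    rewrite /GRing.scale /= mulr1 -/Q -/Sx.
    have -> : expR (c * x) = e x by [].
    rewrite -/K /c in q *.
    nra.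
  - rewrite set_itvcy => x; apply: continuousM.
      have ce : continuous e.
        move=> y; apply/differentiable_continuous/derivable1_diffP.
        exact: (@ex_derive _ _ _ _ _ _ _ (De y)).
      exact: (continuous_subspaceT ce).
    rewrite /S fct_sumE.
    apply: (continuous_big add_continuous) => i _ y.
    apply: continuousM; exact: wc.
have := key 0 t (lexx 0) t0.
rewrite !mulrfctE SE SE w0.
have -> : \sum_i (0 : 'cV[R]_n) i 0 * (0 : 'cV[R]_n) i 0 = 0.
  by apply: big1 => i _; rewrite mxE mul0r.
rewrite mulr0 => h.
have hS : 0 <= \sum_i w t i 0 * w t i 0.
  by apply: sumr_ge0 => i _; nra.
have et := epos t.
have hS0 : \sum_i w t i 0 * w t i 0 = 0 by nra.
have hz : forall i, w t i 0 * w t i 0 = 0.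
  move=> i; apply: (psumr_eq0P _ hS0) => // k _; nra.
apply/matrixP => i j; rewrite (ord1 j) mxE.
have := hz i; nra.
Qed.

Lemma uniq_sol A (s0 : 'cV[R]_n) (s : R -> 'cV[R]_n) : is_solution A s0 s ->
  forall t, 0 <= t -> s t = Emx A t *m s0.
Proof.
move=> [s00 [sc sd]] t t0.
have [E0 [Ec Ed]] := Emx_sol A s0.
suff W : is_solution A 0 (fun u => s u - Emx A u *m s0).
  by have /eqP := uniq0 W t t0; rewrite subr_eq0 => /eqP.
have fE i : (fun u => (s u - Emx A u *m s0) i 0) =
    (fun u => s u i 0) - (fun u => (Emx A u *m s0) i 0).
  by rewrite funeqE => u; rewrite [LHS]mxE [X in _ + X]mxE !fctE.
split; first by rewrite /= s00 E0 subrr.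
split.
  move=> i; rewrite fE => x; apply: continuousB; [exact: sc | exact: Ec].
move=> u u0 i; rewrite fE.
apply: is_derive_eq; first exact: is_deriveB (sd u u0 i) (Ed u u0 i).
by rewrite mulmxBr [RHS]mxE [X in _ = _ + X]mxE.
Qed.

End Aux4.



Section Aux5.
Context {R : realType} {n : nat}.
Variables (N : 'M[R]_n) (c : R).
Hypothesis N_ge0 : forall i j, 0 <= N i j.
Hypothesis c_ge1 : 1 <= c.
Hypothesis colN : forall j, \sum_i N i j <= c - 1.

Lemma powN_ge0 k i j : 0 <= (N ^+ k) i j.
Proof.
elim: k i j => [|k IH] i j; first by rewrite expr0 mxE; case: (i == j).
rewrite exprS mxE; apply: sumr_ge0 => l _; exact: mulr_ge0.
Qed.

Lemma colpow k j : \sum_i (N ^+ k) i j <= (c - 1) ^+ k.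
Proof.
elim: k j => [|k IH] j.
  rewrite expr0 (bigD1 j) //= mxE eqxx big1 ?addr0 // => i /negbTE ij.
  by rewrite mxE ij.
rewrite exprSr.
under eq_bigr do rewrite mxE.
rewrite exchange_big /=.
apply: (@le_trans _ _ (\sum_l (c - 1) ^+ k * N l j)).
  apply: ler_sum => l _; rewrite -mulr_suml ler_wpM2r //.
by rewrite -mulr_sumr exprSr ler_wpM2l // exprn_ge0 // subr_ge0.
Qed.

Lemma entN_ge0 i j (t : R) : 0 <= t -> 0 <= ent N i j t.
Proof.
move=> t0; apply: limr_ge; first exact: coef_cvg.
near=> M; apply: sumr_ge0 => k _; rewrite /coef.
by rewrite mulr_ge0 ?exprn_ge0 // divr_ge0 // powN_ge0.
Unshelve. all: by end_near. Qed.

Lemma colent j (t : R) : 0 <= t -> \sum_i ent N i j t <= expR ((c - 1) * t).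
Proof.
move=> t0.
have [hc <-] := lim_sum_ord (fun i => pseries (coef N 0 i j) t)
  (fun i => coef_cvg N 0 i j t).
rewrite /expR; apply: ler_lim => //; first exact: is_cvg_series_exp_coeff.
near=> M; rewrite /pseries /series /= exchange_big /=.
apply: ler_sum => k _; rewrite /coef -mulr_suml -mulr_suml /exp_coeff /=.
rewrite exprMn mulrAC ler_wpM2r ?invr_ge0 // ler_wpM2r ?exprn_ge0 //.
under eq_bigr do rewrite addn0.
exact: colpow.
Unshelve. all: by end_near. Qed.

Lemma shift_sol (s0 : 'cV[R]_n) (t : R) : 0 <= t ->
  Emx (N - c%:M) t *m s0 = expR (- (c * t)) *: (Emx N t *m s0).
Proof.
move=> t0.
suff S : is_solution (N - c%:M) s0 (fun u => expR (- (c * u)) *: (Emx N u *m s0)).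
  by have := uniq_sol S t t0.
pose e := expR \o ((- c) \*: id).
have De u : is_derive u (1:R) e (expR (((- c) \*: id) u) * ((- c) *: 1)).
  apply: is_derive1_comp.
have eE u : e u = expR (- (c * u)).
  by rewrite /e /= /GRing.scale /= mulNr.
have fE i : (fun u => (expR (- (c * u)) *: (Emx N u *m s0)) i 0) =
    e * (fun u => (Emx N u *m s0) i 0).
  by rewrite funeqE => u; rewrite mxE mulrfctE eE.
have [E0 [Ec Ed]] := Emx_sol N s0.
split; first by rewrite mulr0 oppr0 expR0 scale1r E0.
split.
  move=> i; rewrite fE; apply: continuous_subspaceT => x.
  apply/differentiable_continuous/derivable1_diffP.
  apply: (@ex_derive _ _ _ _ _ _ _ (is_deriveM (De x) (Emx_derive N s0 i x))).
move=> u u0 i; rewrite fE.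
apply: is_derive_eq; first exact: is_deriveM (De u) (Emx_derive N s0 i u).
have -> : expR ((- c \*: id) u) = e u by [].
rewrite eE /=.
set Y := Emx N u *m s0.
rewrite mulmxBl mul_scalar_mx -scalemxAr !mxE /GRing.scale /= mulr1; ring.
Qed.

Lemma decay (s0 : 'cV[R]_n) (t : R) : 0 <= t ->
  \sum_i `|(Emx (N - c%:M) t *m s0) i 0| <= expR (- t) * \sum_j `|s0 j 0|.
Proof.
move=> t0; rewrite shift_sol //.
apply: (@le_trans _ _ (\sum_i expR (- (c * t)) *
    \sum_j ent N i j t * `|s0 j 0|)).
  apply: ler_sum => i _; rewrite !mxE normrM ger0_norm ?expR_ge0 //.
  rewrite ler_wpM2l ?expR_ge0 // (le_trans (ler_norm_sum _ _ _)) //.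
  apply: ler_sum => j _; rewrite mxE normrM ger0_norm //; exact: entN_ge0.
rewrite -mulr_sumr exchange_big /=.
apply: (@le_trans _ _ (expR (- (c * t)) *
    \sum_j expR ((c - 1) * t) * `|s0 j 0|)).
  rewrite ler_wpM2l ?expR_ge0 //; apply: ler_sum => j _.
  rewrite -mulr_suml ler_wpM2r //; exact: colent.
rewrite -mulr_sumr mulrA -expRD; apply: ler_wpM2r.
  by apply: sumr_ge0 => *.
by rewrite le_eqVlt; apply/orP; left; apply/eqP; congr expR; ring.
Qed.

End Aux5.



Section Aux6.
Context {R : realType}.

Lemma sum_ind (m k : nat) : \sum_(i < m) (((i : nat) == k)%:R : R) = (k < m)%N%:R.
Proof.
elim: m => [|m IH]; first by rewrite big_ord0.
rewrite big_ord_recr /= IH -natrD; congr (_%:R).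
case: (ltngtP k m) => h.
- by rewrite ltnS ltnW.
- by rewrite ltnS leqNgt h.
- by rewrite h ltnSn.
Qed.

Lemma sq_abs (x : R) : x ^+ 2 = `|x| ^+ 2.
Proof. by rewrite -normrX ger0_norm // sqr_ge0. Qed.

Lemma enorm_le1 (C : nat) (x : 'cV[R]_C) : enorm x <= \sum_i `|x i 0|.
Proof.
have h0 : 0 <= \sum_i `|x i 0| by apply: sumr_ge0 => *.
rewrite /enorm -(ger0_norm h0) -sqrtr_sqr ler_sqrt ?sqr_ge0 //.
rewrite expr2 mulr_suml; apply: ler_sum => i _.
rewrite sq_abs expr2 ler_wpM2l //.
by rewrite (bigD1 i) //= lerDl; apply: sumr_ge0 => *.
Qed.

Lemma l1_le (C : nat) (x : 'cV[R]_C) : \sum_i `|x i 0| <= C%:R * enorm x.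
Proof.
apply: (@le_trans _ _ (\sum_(i < C) enorm x)); last first.
  by rewrite sumr_const card_ord mulr_natl.
apply: ler_sum => i _.
rewrite /enorm -sqrtr_sqr ler_sqrt; last by apply: sumr_ge0 => *; exact: sqr_ge0.
by rewrite (bigD1 i) //= lerDl; apply: sumr_ge0 => *; exact: sqr_ge0.
Qed.

End Aux6.

Theorem mainTheorem7 (R : realType) (C d : nat) (sigma : R) (pi : nat -> R)
  (hC : (1 <= C)%N) (hd : (1 <= d)%N) (hsigma : 0 < sigma)
  (hpi0 : pi 0%N = 1)
  (hpimono : forall n : nat, (n < C)%N -> pi n.+1 <= pi n)
  (hpiC : 0 <= pi C)
  (hpiC1 : pi C.+1 = 0)
  (hpirec : forall n : nat, (1 <= n <= C)%N ->
     sigma * (pi n.-1 ^+ d - pi n ^+ d) = n%:R * (pi n - pi n.+1)) :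
  let H := Hmat C d sigma pi in
  (forall s0 : 'cV[R]_C,
     is_solution H s0 (fun t => expmx (t *: H) *m s0) /\
     (forall s : R -> 'cV[R]_C, is_solution H s0 s ->
        forall t : R, 0 <= t -> s t = expmx (t *: H) *m s0)) /\
  (exists delta2 D4 : R, 0 < delta2 /\
     forall (s0 : 'cV[R]_C) (t : R), 0 <= t ->
       enorm (expmx (t *: H) *m s0) <= D4 * expR (- (delta2 * t)) * enorm s0).
Proof.
move=> H.
have EE s0 : (fun t => expmx (t *: H) *m s0) = (fun t => Emx H t *m s0).
  by apply: funext => t; rewrite expmx_Emx.
split.
  move=> s0; rewrite EE; split; first exact: Emx_sol.
  by move=> s S t t0; rewrite expmx_Emx; exact: uniq_sol S t t0.
have pi_ge0 : forall k, (k <= C)%N -> 0 <= pi k.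
  suff h : forall m, (m <= C)%N -> 0 <= pi (C - m)%N.
    by move=> k kC; have := h (C - k)%N (leq_subr _ _); rewrite subKn.
  elim=> [|m IH] hm; first by rewrite subn0.
  apply: le_trans (IH (ltnW hm)) _.
  have -> : (C - m)%N = (C - m.+1).+1 by rewrite subnSK.
  apply: hpimono; lia.
have offd : forall i j : 'I_C, i != j -> 0 <= H i j.
  move=> i j ne; rewrite /H /Hmat mxE /=.
  have ai : 0 <= sigma * d%:R * pi i ^+ d.-1.
    apply: mulr_ge0; first by apply: mulr_ge0 => //; exact: ltW.
    by apply: exprn_ge0; apply: pi_ge0; exact: ltnW (ltn_ord i).
  case: ifP => _ //.
  case: ifP => [/eqP [e] | _].
    by case/negP: ne; apply/eqP/val_inj; rewrite /= e.
  by case: ifP => _.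
pose a (j : 'I_C) := sigma * d%:R * pi j.+1 ^+ d.-1.
have a_ge0 : forall j : 'I_C, 0 <= a j.
  move=> j; apply: mulr_ge0; first by apply: mulr_ge0 => //; exact: ltW.
  by apply: exprn_ge0; apply: pi_ge0; exact: ltn_ord j.
have entE : forall i j : 'I_C, H i j =
    ((i : nat) == j.+1)%:R * a j + ((i : nat) == j)%:R * (- (a j + j.+1%:R))
    + ((i.+1 == j))%:R * j%:R.
  move=> i j; rewrite /H /Hmat mxE /=.
  have -> : (j.+2 == i.+1) = ((i : nat) == j.+1) by rewrite eqSS eq_sym.
  have -> : (j.+1 == i.+1) = ((i : nat) == j) by rewrite eqSS eq_sym.
  have -> : (j.+1 == i.+2) = (i.+1 == j) by rewrite eqSS eq_sym.
  case: ((i : nat) =P j.+1) => [e|n1].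
    rewrite e (gtn_eqF (ltnSn j)) (gtn_eqF (leqnSn j.+1)).
    by rewrite mul1r !mul0r !addr0.
  case: ((i : nat) =P j) => [e|n2].
    rewrite e (gtn_eqF (ltnSn j)).
    by rewrite !mul0r mul1r add0r addr0.
  case: (i.+1 =P j) => [e|n3].
    by rewrite !mul0r mul1r !add0r e.
  by rewrite !mul0r !add0r.
have colH : forall j : 'I_C, \sum_i H i j <= -1.
  move=> j.
  under eq_bigr do rewrite entE.
  rewrite !big_split /= -!mulr_suml (sum_ind C j.+1) (sum_ind C j) (ltn_ord j).
  have s3 : \sum_(i < C) ((i.+1 == j)%:R : R) <= 1.
    apply: (@le_trans _ _ (\sum_(i < C) (((i : nat) == j.-1)%:R : R))).
      apply: ler_sum => i _; case: (i.+1 =P j) => [<-|_] //=.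
      by rewrite eqxx.
    by rewrite sum_ind; case: (_ < _)%N.
  have s3' : 0 <= \sum_(i < C) ((i.+1 == j)%:R : R) by apply: sumr_ge0 => *.
  have s1 : ((j.+1 < C)%N%:R : R) <= 1 by case: (_ < _)%N.
  have s1' : 0 <= ((j.+1 < C)%N%:R : R) by [].
  have := a_ge0 j.
  have hj : 0 <= (j%:R : R) by [].
  rewrite -natr1 in s3 s3' *.
  move=> ha; rewrite (_ : (true%:R : R) = 1) //.
  nra.
set c := Mb H + 1.
set N := H + c%:M.
have HN : H = N - c%:M by rewrite /N addrK.
have N_ge0 : forall i j, 0 <= N i j.
  move=> i j; rewrite /N mxE [X in _ + X]mxE; case: (eqVneq i j) => [->|ne].
    rewrite mulr1n; have := entry_le_Mb H j j.
    rewrite /c ler_norml => /andP [h1 _]; lra.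
  by rewrite mulr0n addr0; exact: offd.
have c_ge1 : 1 <= c by rewrite /c lerDr Mb_ge0.
have colN : forall j, \sum_i N i j <= c - 1.
  move=> j; under eq_bigr do rewrite /N mxE [X in _ + X]mxE.
  rewrite big_split /= [X in _ + X <= _](bigD1 j) //= eqxx mulr1n [X in _ + (_ + X) <= _]big1 ?addr0.
    have := colH j; lra.
  by move=> i /negbTE ->; rewrite mulr0n.
exists 1, C%:R; split => // s0 t t0.
rewrite expmx_Emx HN mul1r.
apply: (le_trans (enorm_le1 _)).
apply: (le_trans (@decay R C N c N_ge0 c_ge1 colN s0 t t0)).
rewrite -mulrA [X in _ <= X]mulrC -mulrA ler_wpM2l ?expR_ge0 //.
by rewrite mulrC l1_le.
Qed.
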